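(* For all positive integers $d\le m$, $r$ and every $\varepsilon>0$, $$\mathbf{n}_\infty(d,m,r,\varepsilon)\le\mathbf{GR}\Big(\big\lfloor(1+4\varepsilon^{-1})^d\big\rfloor,\ \big\lfloor(1+4\varepsilon^{-1})^d\big\rfloor\,2^d\,\frac{m!}{(m-d)!},\ r\Big).$$
   Context: Spaces are real. $\ell_\infty^k=(\mathbb{R}^k,\|\cdot\|_\infty)$. $\mathrm{Emb}(\ell_\infty^a,\ell_\infty^b)$ is the set of linear isometric embeddings, with the operator-norm metric. An $r$-coloring is a map into $\{0,\dots,r-1\}$; a subset $F$ of the colored space $M$ is $\varepsilon$-monochromatic if for some color $i$ every element of $F$ is within distance $\varepsilon$ of an element of $M$ of color $i$. $\mathbf{n}_\infty(d,m,r,\varepsilon)$ is the least $n$ such that every $r$-coloring of $\mathrm{Emb}(\ell_\infty^d,\ell_\infty^n)$ has an $\varepsilon$-monochromatic set of the form $\gamma\circ\mathrm{Emb}(\ell_\infty^d,\ell_\infty^m)$ for some $\gamma\in\mathrm{Emb}(\ell_\infty^m,\ell_\infty^n)$. For finite linear orders $R,S$, a rigid surjection $f:R\to S$ is a surjection with $\min f^{-1}(s_0)<\min f^{-1}(s_1)$ whenever $s_0<s_1$; $\mathrm{Epi}(R,S)$ is the set of rigid surjections, and integers are naturally ordered as $\{0,\dots,a-1\}$. $\mathbf{GR}(a,b,r)$ is the least $n$ such that every $r$-coloring of $\mathrm{Epi}(n,a)$ is constant on a set of the form $\mathrm{Epi}(b,a)\circ\gamma$ for some $\gamma\in\mathrm{Epi}(n,b)$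 (Dual Ramsey Theorem of Graham–Rothschild). *)

(* Defs.v *)
From mathcomp Require Import all_boot all_order all_algebra.
From mathcomp Require Import all_classical all_reals.
Set Implicit Arguments. Unset Strict Implicit. Unset Printing Implicit Defensive.
Import Order.TTheory GRing.Theory Num.Theory.
Local Open Scope ring_scope.
Local Open Scope classical_set_scope.

(* Vectors of l_infty^k are row vectors 'rV[R]_k; a linear map l_infty^a -> l_infty^b
   is a matrix A : 'M[R]_(a,b) acting by x |-> x *m A.  Composition gamma \o phi
   (phi : a -> b, gamma : b -> c) is the matrix phi *m gamma. *)

Definition supnorm (R : realType) (k : nat) (x : 'rV[R]_k) : R :=
  \big[Num.max/0]_(i < k) `|x 0 i|.

Definition isEmb (R : realType) (a b : nat) (A : 'M[R]_(a, b)) : Prop :=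
  forall x : 'rV[R]_a, supnorm (x *m A) = supnorm x.

Definition opnorm (R : realType) (a b : nat) (A : 'M[R]_(a, b)) : R :=
  sup [set supnorm (x *m A) | x in [set x : 'rV[R]_a | supnorm x <= 1]].

(* The Ramsey property defining n_infty(d,m,r,eps): every r-coloring of Emb(d,n)
   has an eps-monochromatic set gamma \o Emb(d,m), gamma in Emb(m,n).
   A coloring is any map c on matrices whose values on embeddings lie in {0..r-1}
   (its values on non-embeddings are irrelevant). *)
Definition EmbRamsey (R : realType) (d m r : nat) (eps : R) (n : nat) : Prop :=
  forall c : 'M[R]_(d, n) -> nat,
    (forall A, isEmb A -> (c A < r)%N) ->
    exists2 gamma : 'M[R]_(m, n), isEmb gamma &
      exists2 i : nat, (i < r)%N &
        forall phi : 'M[R]_(d, m), isEmb phi ->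
          exists2 psi : 'M[R]_(d, n), isEmb psi /\ c psi = i &
            opnorm (phi *m gamma - psi) <= eps.

(* least element of the preimage f^{-1}(s) (n if empty) *)
Definition minpre (n a : nat) (f : {ffun 'I_n -> 'I_a}) (s : 'I_a) : nat :=
  \big[minn/n]_(i < n | f i == s) (i : nat).

Definition rigid_surj (n a : nat) (f : {ffun 'I_n -> 'I_a}) : Prop :=
  (forall s : 'I_a, exists i, f i = s) /\
  (forall s0 s1 : 'I_a, (s0 < s1)%N -> (minpre f s0 < minpre f s1)%N).

Definition compf (n b a : nat) (f : {ffun 'I_b -> 'I_a}) (g : {ffun 'I_n -> 'I_b})
  : {ffun 'I_n -> 'I_a} := [ffun i => f (g i)].

Definition GRprop (a b r n : nat) : Prop :=
  forall c : {ffun 'I_n -> 'I_a} -> nat,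
    (forall f, rigid_surj f -> (c f < r)%N) ->
    exists2 gamma : {ffun 'I_n -> 'I_b}, rigid_surj gamma &
      exists i : nat, forall f : {ffun 'I_b -> 'I_a}, rigid_surj f ->
        c (compf f gamma) = i.

Definition isGR (a b r N : nat) : Prop :=
  GRprop a b r N /\ forall M, (M < N)%N -> ~ GRprop a b r M.

(* Main.v *)
Require Import Defs.
From mathcomp Require Import all_boot all_order all_algebra.
From mathcomp Require Import all_classical all_reals.
From mathcomp Require Import ring lra zify.
From mathcomp Require Import fingroup perm.
Set Implicit Arguments. Unset Strict Implicit. Unset Printing Implicit Defensive.
Import Order.TTheory GRing.Theory Num.Theory.

Definition ints (n : nat) : seq int :=
  map Posz (iota 0 n.+1) ++ map Negz (iota 0 n).

Fixpoint ball (d n : nat) : seq (seq int) :=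
  match d with
  | 0 => [:: [::]]
  | d'.+1 => [seq t :: z | t <- ints n, z <- ball d' (n - absz t)]
  end.

Lemma ball_S d n : ball d.+1 n = [seq t :: z | t <- ints n, z <- ball d (n - absz t)].
Proof. by []. Qed.

Definition n1 (z : seq int) : nat := sumn [seq absz x | x <- z].

Lemma Posz_inj : injective Posz. Proof. by move=> a b []. Qed.
Lemma Negz_inj : injective Negz. Proof. by move=> a b []. Qed.

Lemma mem_ints n t : (t \in ints n) = (absz t <= n).
Proof.
rewrite /ints mem_cat; case: t => k.
  have -> : (Posz k \in map Negz (iota 0 n)) = false.
    by apply/negP => /mapP [].
  rewrite orbF (mem_map Posz_inj) mem_iota.
  by rewrite add0n ltnS.
have -> : (Negz k \in map Posz (iota 0 n.+1)) = false.
  by apply/negP => /mapP [].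
rewrite (mem_map Negz_inj) mem_iota.
by rewrite add0n.
Qed.

Lemma mem_ball d n z : (z \in ball d n) = (size z == d) && (n1 z <= n).
Proof.
elim: d n z => [|d IH] n z.
  by rewrite /= inE; case: z => //=.
rewrite ball_S.
apply/allpairsPdep/idP.
  move=> [t [z' [ti zi ->]]]; rewrite IH in zi; rewrite mem_ints in ti.
  case/andP: zi => hs hz.
  rewrite /= eqSS hs /= /n1 /=.
  by rewrite -(subnKC ti) leq_add2l.
case: z => [//|t z'] /= /andP [hs hn].
exists t, z'; split => //.
  rewrite mem_ints; apply: leq_trans hn; rewrite /n1 /=; exact: leq_addr.
rewrite IH -eqSS hs /=; rewrite /n1 /= in hn.
by rewrite leq_subRL // ?(leq_trans (leq_addr _ _) hn).
Qed.

Lemma uniq_ints n : uniq (ints n).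
Proof.
rewrite cat_uniq; apply/and3P; split.
- by rewrite (map_inj_uniq Posz_inj) iota_uniq.
- by apply/hasPn => x /mapP [k _ ->]; apply/negP => /mapP [].
- by rewrite (map_inj_uniq Negz_inj) iota_uniq.
Qed.

Lemma uniq_ball d n : uniq (ball d n).
Proof.
elim: d n => [|d IH] n //.
rewrite ball_S; apply: allpairs_uniq_dep; first exact: uniq_ints.
  by move=> t _; apply: IH.
by move=> [x y] [x' y'] _ _ /= [-> ->].
Qed.

Definition A d n := size (ball d n).

Lemma sumn_map_big (T : Type) (s : seq T) (F : T -> nat) :
  sumn [seq F x | x <- s] = \sum_(x <- s) F x.
Proof. by rewrite sumnE big_map. Qed.

Lemma sum_rev k (F : nat -> nat) :
  \sum_(x <- iota 0 k) F (k - x.+1) = \sum_(j < k) F j.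
Proof.
rewrite -(big_mkord xpredT) big_nat_rev /index_iota subn0.
by apply: eq_bigr => i _; rewrite add0n.
Qed.

Lemma A_rec d n :
  A d.+1 n = \sum_(j < n.+1) A d j + \sum_(j < n) A d j.
Proof.
rewrite /A ball_S size_allpairs_dep /ints map_cat sumn_cat -!map_comp.
rewrite !sumn_map_big /= -!(sum_rev _ (fun j => size (ball d j))).
congr (_ + _); apply: eq_bigr => k _ //; by rewrite subSS.
Qed.

Lemma hs1 d n : \sum_(j < n.+1) 'C(j + d, d) = 'C(n + d.+1, d.+1).
Proof.
elim: n => [|n IH]; first by rewrite big_ord1 add0n !binn.
rewrite big_ord_recr /= IH [in RHS]addSn binS; congr (_ + _).
by rewrite addSnnS.
Qed.

Lemma hs0 d n : \sum_(j < n) 'C(j, d) = 'C(n, d.+1).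
Proof.
elim: n => [|n IH]; first by rewrite big_ord0.
by rewrite big_ord_recr /= IH binS.
Qed.

Lemma sum_le_S (F : nat -> nat) n : \sum_(j < n) F j <= \sum_(j < n.+1) F j.
Proof. by rewrite big_ord_recr /= leq_addr. Qed.

Lemma A_ub d n : A d n <= 2 ^ d * 'C(n + d, d).
Proof.
elim: d n => [|d IH] n; first by rewrite /A /= bin0.
rewrite A_rec expnS -mulnA.
apply: (@leq_trans (2 * \sum_(j < n.+1) A d j)).
  by rewrite mul2n -addnn leq_add2l sum_le_S.
rewrite leq_mul2l /= -hs1 big_distrr /=.
by apply: leq_sum => j _; apply: IH.
Qed.

Lemma A_lb d n : 2 ^ d * 'C(n, d) <= A d n.
Proof.
elim: d n => [|d IH] n; first by rewrite /A /= bin0.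
rewrite A_rec expnS -mulnA -hs0 big_distrr /= mul2n -addnn.
apply: leq_add; last by apply: leq_sum => j _; apply: IH.
apply: leq_trans (sum_le_S _ _).
by apply: leq_sum => j _; apply: IH.
Qed.

Definition addz (c z : seq int) : seq int := [seq x.1 + x.2 | x <- zip c z]%R.
Definition subz (c z : seq int) : seq int := [seq x.1 - x.2 | x <- zip c z]%R.

Lemma abszD_le (a b : int) : (`|(a + b)%R| <= `|a| + `|b|)%N.
Proof. by rewrite -lez_nat PoszD !abszE; exact: ler_normD. Qed.

Lemma size_addz c z : size c = size z -> size (addz c z) = size z.
Proof. by move=> h; rewrite /addz size_map size_zip h minnn. Qed.

Lemma n1_addz c z : n1 (addz c z) <= n1 c + n1 z.
Proof.
elim: c z => [|a c IH] [|b z]; rewrite /addz /n1 //=.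
rewrite addnACA; apply: leq_add; [exact: abszD_le | exact: IH].
Qed.

Lemma addz_inj c z z' : size z = size c -> size z' = size c ->
  addz c z = addz c z' -> z = z'.
Proof.
elim: c z z' => [|a c IH] [|b z] [|b' z'] //= [h1] [h2] [e1 e2].
congr (_ :: _); last exact: IH.
by move/addrI: e1.
Qed.

Lemma addz_dist c c' z z' : size z = size c -> size z' = size c -> size c' = size c ->
  addz c z = addz c' z' -> n1 (subz c c') <= n1 z + n1 z'.
Proof.
elim: c c' z z' => [|a c IH] [|a' c'] [|b z] [|b' z'] //= [h1] [h2] [h3] [e1 e2].
rewrite /n1 /subz /=.
rewrite addnACA; apply: leq_add; last exact: IH.
have -> : (a - a' = b' - b)%R.
  have -> : a = (a' + b' - b)%R by rewrite -e1 addrK.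
  by ring.
apply: leq_trans (abszD_le _ _) _; by rewrite abszN addnC.
Qed.

Lemma pack_nat (T : eqType) (S : seq T) (cen : T -> seq int) d rho sigma :
  uniq S -> (forall s, s \in S -> size (cen s) = d) ->
  (forall s s', s \in S -> s' \in S -> s != s' -> 2 * rho < n1 (subz (cen s) (cen s'))) ->
  (forall s, s \in S -> n1 (cen s) + rho <= sigma) ->
  size S * A d rho <= A d sigma.
Proof.
move=> uS hsz hsep hin.
pose L := [seq addz (cen s) z | s <- S, z <- ball d rho].
have uL : uniq L.
  apply: allpairs_uniq => //; first exact: uniq_ball.
  move=> [s z] [s' z'] /allpairsP [[x y] [xS yb [-> ->]]] /allpairsP [[x' y'] [xS' yb' [-> ->]]] /= e.
  rewrite mem_ball in yb; rewrite mem_ball in yb'.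
  case/andP: yb => /eqP hy hyn; case/andP: yb' => /eqP hy' hyn'.
  have [ex | nex] := eqVneq x x'.
    subst x'; congr (_, _); apply: addz_inj e; by rewrite hsz.
  have := hsep _ _ xS xS' nex.
  have := addz_dist _ _ _ e; rewrite !hsz // => /(_ hy hy' erefl) h1 h2.
  have : 2 * rho < 2 * rho.
    apply: leq_trans h2 _; apply: leq_trans h1 _; rewrite mul2n -addnn; exact: leq_add.
  by rewrite ltnn.
have sL : size L = size S * A d rho by rewrite size_allpairs.
rewrite -sL; apply: uniq_leq_size => //.
move=> w /allpairsP [[x y] [xS yb ->]] /=.
rewrite mem_ball in yb; case/andP: yb => /eqP hy hyn.
rewrite mem_ball size_addz ?hy ?hsz //= eqxx /=.
apply: leq_trans (n1_addz _ _) _; apply: leq_trans (hin _ xS).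
by rewrite leq_add2l.
Qed.

Local Open Scope ring_scope.

Section Real.
Variable R : realType.

Definition l1 (d : nat) (v : 'I_d -> R) : R := \sum_i `|v i|.
Definition l1d (d : nat) (u v : 'I_d -> R) : R := \sum_i `|u i - v i|.

Lemma floor_diff (a b : R) :
  `|a - b| - 1 <= `|((Num.floor a - Num.floor b)%:~R : R)|.
Proof.
have /andP [h1 h2] := floor_itv a.
have /andP [h3 h4] := floor_itv b.
rewrite intrB intrD in h2 h4 *.
set u := (Num.floor a)%:~R in h1 h2 *; set v := (Num.floor b)%:~R in h3 h4 *.
have e1 := ler_norm (u - v); have e2 := ler_norm (v - u).
rewrite distrC in e2.
rewrite lerBlDr ler_norml; apply/andP; split; lra.
Qed.

Lemma floor_abs (a : R) : `|((Num.floor a)%:~R : R)| <= `|a| + 1.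
Proof.
have /andP [h1 h2] := floor_itv a.
rewrite intrD in h2.
set u := (Num.floor a)%:~R in h1 h2 *.
have e1 := ler_norm a; have e2 := ler_norm (- a); rewrite normrN in e2.
rewrite ler_norml; apply/andP; split; lra.
Qed.

Lemma n1_subz_map (I : Type) (e : seq I) (f g : I -> int) :
  (n1 (subz (map f e) (map g e)))%:R = \sum_(x <- e) `|((f x - g x)%:~R : R)|.
Proof.
elim: e => [|x e IH]; first by rewrite big_nil.
by rewrite big_cons /n1 /subz /= natrD -IH natr_absz intr_norm.
Qed.

Lemma n1_map (I : Type) (e : seq I) (f : I -> int) :
  (n1 (map f e))%:R = \sum_(x <- e) `|((f x)%:~R : R)|.
Proof.
elim: e => [|x e IH]; first by rewrite big_nil.
by rewrite big_cons /n1 /= natrD -IH natr_absz intr_norm.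
Qed.

Lemma sum_enum d (F : 'I_d -> R) : \sum_(x <- enum 'I_d) F x = \sum_i F i.
Proof. by rewrite big_enum. Qed.

Lemma powD_le (q eta : R) d : 0 <= q -> 0 <= eta <= 1 ->
  (q + eta) ^+ d <= q ^+ d + eta * (d%:R * (q + 1) ^+ d).
Proof.
move=> hq /andP [he0 he1].
elim: d => [|d IH]; first by rewrite !expr0 mul0r mulr0 addr0.
have hq1 : 0 <= q + 1 by lra.
have A1 : q ^+ d <= (q + 1) ^+ d by rewrite lerXn2r // ?nnegrE //; lra.
have A2 : 0 <= (q + 1) ^+ d := exprn_ge0 _ hq1.
have A3 : 0 <= q ^+ d := exprn_ge0 _ hq.
rewrite !exprS.
apply: (@le_trans _ _ ((q + eta) * (q ^+ d + eta * (d%:R * (q + 1) ^+ d)))).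
  by apply: ler_wpM2l => //; lra.
set B := (q + 1) ^+ d.
have hd : 0 <= d%:R :> R by [].
have : (q + eta) * (eta * (d%:R * B)) <= (q + 1) * (eta * (d%:R * B)).
  apply: ler_wpM2r; last lra.
  by apply: mulr_ge0 => //; apply: mulr_ge0.
have : eta * q ^+ d <= eta * ((q + 1) * B).
  apply: ler_wpM2l => //; apply: le_trans A1 _.
  rewrite -[X in X <= _]mul1r; apply: ler_wpM2r => //; lra.
rewrite mulrS.
nra.
Qed.

Lemma pow_gap (q s : R) d : 0 <= q -> q ^+ d < s ->
  exists eta, 0 < eta /\ (q + eta) ^+ d < s.
Proof.
move=> hq hs.
set D := s - q ^+ d; set M := d%:R * (q + 1) ^+ d.
have hD : 0 < D by rewrite subr_gt0.
have hM : 0 <= M by apply: mulr_ge0 => //; apply: exprn_ge0; lra.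
exists (D / (D + M + 1)).
have hpos : 0 < D + M + 1 by lra.
have e0 : 0 < D / (D + M + 1) by apply: divr_gt0.
split => //.
have e1 : D / (D + M + 1) <= 1 by rewrite ler_pdivrMr // mul1r; lra.
apply: le_lt_trans (powD_le _ hq _) _; first by apply/andP; split => //; lra.
rewrite -/M.
have : D / (D + M + 1) * M < D.
  rewrite mulrAC ltr_pdivrMr // .
  nra.
rewrite /D; lra.
Qed.


Lemma ffact_lb n m : ((n - m) ^ m <= n ^_ m)%N.
Proof.
rewrite ffact_prod -[X in (X <= _)%N]iter_muln_1 -big_const_ord.
apply: leq_prod => i _; apply: leq_sub2l; exact: ltnW.
Qed.

Lemma ffact_ub n m : (n ^_ m <= n ^ m)%N.
Proof.
rewrite ffact_prod -[X in (_ <= X)%N]iter_muln_1 -big_const_ord.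
by apply: leq_prod => i _; apply: leq_subr.
Qed.

Lemma pack_ffact d (S : seq {ffun 'I_d -> R}) rho sigma cen :
  uniq S -> (forall s, s \in S -> size (cen s) = d) ->
  (forall s s', s \in S -> s' \in S -> s != s' -> (2 * rho < n1 (subz (cen s) (cen s')))%N) ->
  (forall s, s \in S -> (n1 (cen s) + rho <= sigma)%N) ->
  (size S * (rho - d) ^ d <= (sigma + d) ^ d)%N.
Proof.
move=> uS hs hsep hin.
have h := pack_nat uS hs hsep hin.
have h2 : (size S * (2 ^ d * 'C(rho, d)) <= 2 ^ d * 'C(sigma + d, d))%N.
  apply: leq_trans (A_ub _ _); apply: leq_trans h; rewrite leq_mul2l A_lb orbT //.
rewrite mulnCA leq_pmul2l ?expn_gt0 // in h2.
have h3 : (size S * 'C(rho, d) * d`! <= 'C(sigma + d, d) * d`!)%N by rewrite leq_mul2r h2 orbT.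
rewrite -mulnA !bin_ffact in h3.
apply: leq_trans (ffact_ub _ _); apply: leq_trans h3.
by rewrite leq_mul2l ffact_lb orbT.
Qed.

Lemma packing d (delta : R) (S : seq {ffun 'I_d -> R}) :
  (0 < d)%N -> 0 < delta -> uniq S ->
  (forall s, s \in S -> l1 s <= 1) ->
  (forall s s', s \in S -> s' \in S -> s != s' -> delta <= l1d s s') ->
  (size S)%:R <= (1 + 2 / delta) ^+ d.
Proof.
move=> hd hdel uS hB hsep.
rewrite leNgt; apply/negP => hS.
set q := 1 + 2 / delta in hS.
have hq : 0 <= q by rewrite /q; have := divr_gt0 (ltr0Sn R 1) hdel; lra.
have [eta [heta hgap]] := pow_gap hq hS.
set C : R := 3 * d%:R / delta + 1 + 3 * d%:R.
have hC : 0 <= C.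
  rewrite /C; have : 0 <= 3 * d%:R / delta by apply: divr_ge0 => //; [apply: mulr_ge0 | lra].
  have : 0 <= d%:R :> R by []. lra.
set X := (Num.truncn (C / eta)).+1.
have hX : C / eta < X%:R.
  by rewrite /X; have := truncn_itv (divr_ge0 hC (ltW heta)); case/andP.
have hX' : C < eta * X%:R by rewrite mulrC -ltr_pdivrMr.
set rho := (X + d)%N.
set L := (Num.truncn ((2 * rho%:R + d%:R) / delta)).+1.
have hLge : 0 <= (2 * rho%:R + d%:R) / delta :> R.
  by apply: divr_ge0; [have : 0 <= rho%:R :> R by []; have : 0 <= d%:R :> R by []; lra | lra].
have hL1 : (2 * rho%:R + d%:R) / delta < L%:R.
  by rewrite /L; have := truncn_itv hLge; case/andP.
have hL2 : L%:R <= (2 * rho%:R + d%:R) / delta + 1.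
  rewrite /L -addn1 natrD lerD2r; have := truncn_itv hLge; case/andP => //.
have hL1' : 2 * rho%:R + d%:R < L%:R * delta by rewrite -ltr_pdivrMr.
set sigma := (L + d + rho)%N.
pose cen (s : {ffun 'I_d -> R}) := [seq Num.floor (L%:R * s i) | i <- enum 'I_d].
have key := @pack_ffact d S rho sigma cen uS.
have : (size S * (rho - d) ^ d <= (sigma + d) ^ d)%N.
  apply: key.
  - by move=> s _; rewrite /cen size_map size_enum_ord.
  - move=> s s' sS s'S ne.
    rewrite -(ltr_nat R) /cen n1_subz_map sum_enum natrM.
    have hs := hsep _ _ sS s'S ne.
    have : L%:R * delta - d%:R <= \sum_i `|((Num.floor (L%:R * s i) - Num.floor (L%:R * s' i))%:~R : R)|.
      have hsum : \sum_i (`|L%:R * s i - L%:R * s' i| - 1) <= \sum_i `|((Num.floor (L%:R * s i) - Num.floor (L%:R * s' i))%:~R : R)|.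
        by apply: ler_sum => i _; exact: floor_diff.
      apply: le_trans hsum.
      rewrite sumrB sumr_const card_ord.
      have -> : \sum_i `|L%:R * s i - L%:R * s' i| = L%:R * l1d s s'.
        rewrite /l1d mulr_sumr; apply: eq_bigr => i _.
        by rewrite -mulrBr normrM ger0_norm.
      rewrite lerD2r ler_wpM2l //.
    have : (2 : R) = 2%:R by []. lra.
  - move=> s sS.
    rewrite /sigma leq_add2r.
    rewrite -(ler_nat R) /cen n1_map sum_enum natrD.
    have hsum : \sum_i `|((Num.floor (L%:R * s i))%:~R : R)| <= \sum_i (`|L%:R * s i| + 1).
      by apply: ler_sum => i _; exact: floor_abs.
    apply: le_trans hsum _.
    rewrite big_split /= sumr_const card_ord.
    have -> : \sum_i `|L%:R * s i| = L%:R * l1 s.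
      by rewrite /l1 mulr_sumr; apply: eq_bigr => i _; rewrite normrM ger0_norm.
    rewrite lerD2r; rewrite -[X in _ <= X]mulr1; apply: ler_wpM2l => //; exact: hB.
rewrite -(ler_nat R) natrM !natrX.
have -> : (rho - d)%N = X by rewrite /rho addnK.
have hsd : ((sigma + d)%:R : R) < (q + eta) * X%:R.
  rewrite /sigma /rho !natrD.
  rewrite /rho natrD in hL2.
  have : (q + eta) * X%:R = X%:R + 2 / delta * X%:R + eta * X%:R by rewrite /q; ring.
  move=> ->.
  have : (2 * (X%:R + d%:R) + d%:R) / delta = 2 / delta * X%:R + 3 * d%:R / delta.
    rewrite !mulrDl; field; lra.
  move=> e; rewrite e in hL2.
  rewrite /C in hX'; lra.
have hXpos : (0 : R) < X%:R by rewrite ltr0n.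
have : ((sigma + d)%:R : R) ^+ d < (size S)%:R * X%:R ^+ d.
  have h3 : ((sigma + d)%:R : R) ^+ d <= ((q + eta) * X%:R) ^+ d.
    apply: lerXn2r; rewrite ?nnegrE //; last exact: ltW.
    apply: mulr_ge0; [lra | exact: ltW].
  apply: le_lt_trans h3 _.
  rewrite exprMn ltr_pM2r //; exact: exprn_gt0.
move=> h1 h2; have := lt_le_trans h1 h2; by rewrite ltxx.
Qed.

End Real.

Section Net.
Variable R : realType.
Variable d : nat.
Notation V := {ffun 'I_d -> R}.

Definition v0 : V := [ffun => 0].
Definition ev (i : 'I_d) : V := [ffun i' => (i' == i)%:R].

Lemma l1_ge0 (v : 'I_d -> R) : 0 <= l1 v.
Proof. by apply: sumr_ge0 => i _. Qed.

Lemma l1d_sym (u v : 'I_d -> R) : l1d u v = l1d v u.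
Proof. by apply: eq_bigr => i _; rewrite distrC. Qed.

Lemma l1d_tri (u v w : 'I_d -> R) : l1d u w <= l1d u v + l1d v w.
Proof.
rewrite /l1d -big_split /=; apply: ler_sum => i _.
by apply: le_trans (ler_normD _ _); rewrite addrA subrK.
Qed.

Lemma l1d_l1 (u v : 'I_d -> R) : l1d u v <= l1 u + l1 v.
Proof.
rewrite /l1d /l1 -big_split /=; apply: ler_sum => i _.
by apply: le_trans (ler_normB _ _).
Qed.

Lemma l1_l1d (u v : 'I_d -> R) : l1 v <= l1 u + l1d u v.
Proof.
rewrite /l1d /l1 -big_split /=; apply: ler_sum => i _.
have e : v i = u i - (u i - v i) by rewrite opprB addrC subrK.
by rewrite {1}e; exact: ler_normB.
Qed.

Lemma l1d_refl (u : 'I_d -> R) : l1d u u = 0.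
Proof. by rewrite /l1d big1 // => i _; rewrite subrr normr0. Qed.

Lemma l1_v0 : l1 v0 = 0.
Proof. by rewrite /l1 big1 // => i _; rewrite ffunE normr0. Qed.

Lemma l1_ev i : l1 (ev i) = 1.
Proof.
rewrite /l1 (bigD1 i) //= big1 ?addr0 => [|j hj]; first by rewrite ffunE eqxx normr1.
by rewrite ffunE (negbTE hj) normr0.
Qed.

Lemma l1d_v0_ev i : l1d v0 (ev i) = 1.
Proof.
rewrite /l1d -(l1_ev i); apply: eq_bigr => j _; by rewrite ffunE sub0r normrN.
Qed.

Lemma l1d_ev i j : i != j -> l1d (ev i) (ev j) = 2.
Proof.
move=> ne.
rewrite /l1d (bigD1 i) //= (bigD1 j) /=; last by rewrite eq_sym.
rewrite big1 => [|k /andP [hk1 hk2]]; last by rewrite !ffunE (negbTE hk1) (negbTE hk2) subrr normr0.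
rewrite !ffunE eqxx (negbTE ne) eq_sym (negbTE ne) eqxx subr0 sub0r normrN normr1 addr0.
by [].
Qed.

Definition sepS (delta : R) (S : seq V) :=
  [/\ uniq S, (forall s, s \in S -> l1 s <= 1) &
      (forall s s', s \in S -> s' \in S -> s != s' -> delta <= l1d s s')].

Definition base : seq V := v0 :: [seq ev i | i <- enum 'I_d].

Lemma ev_inj : injective ev.
Proof.
move=> i j /ffunP /(_ i); rewrite !ffunE eqxx.
by case: eqP => // _ /eqP; rewrite /= mulr0n oner_eq0.
Qed.

Lemma base_sep delta : (0 < d)%N -> delta <= 1 -> sepS delta base.
Proof.
move=> hd hdel; split.
- rewrite /= map_inj_uniq ?enum_uniq ?andbT; last exact: ev_inj.
  apply/mapP => -[i _ /ffunP /(_ i)]; rewrite !ffunE eqxx => /eqP.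
  by rewrite eq_sym oner_eq0.
- move=> s; rewrite inE => /orP [/eqP -> | /mapP [i _ ->]].
    by rewrite l1_v0.
  by rewrite l1_ev.
- move=> s s'; rewrite !inE.
  move=> /orP [/eqP -> | /mapP [i _ ->]] /orP [/eqP -> | /mapP [j _ ->]];
    rewrite ?eqxx // => ne.
  + by rewrite l1d_v0_ev.
  + by rewrite l1d_sym l1d_v0_ev.
  + rewrite l1d_ev; first lra.
    by apply: contraNneq ne => ->.
Qed.

Lemma max_sep (delta : R) (K : nat) :
  (forall S, sepS delta S -> (size S <= K)%N) ->
  (0 < d)%N -> 0 < delta -> delta <= 1 ->
  exists S, [/\ sepS delta S, {subset base <= S} &
    forall y : V, l1 y <= 1 -> exists2 s, s \in S & l1d y s < delta].
Proof.
move=> hK hd hdel0 hdel.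
suff: forall k S, sepS delta S -> {subset base <= S} -> (K - size S <= k)%N ->
  exists S, [/\ sepS delta S, {subset base <= S} &
    forall y : V, l1 y <= 1 -> exists2 s, s \in S & l1d y s < delta].
  move=> /(_ K base (base_sep hd hdel)); apply => //; exact: leq_subr.
elim=> [|k IH] S hS hb hk.
- exists S; split => // y hy.
  case: (boolP (has (fun s : V => l1d y s < delta) S)) => [/hasP [s ? ?]|hn]; first by exists s.
  exfalso.
  have hS' : sepS delta (y :: S).
    case: hS => u b sp; split.
    + rewrite /= u andbT; apply/negP => yS.
      by move/hasPn: hn => /(_ y yS); rewrite l1d_refl hdel0.
    + by move=> s; rewrite inE => /orP [/eqP -> //|]; apply: b.
    + move=> s s'; rewrite !inE => /orP [/eqP -> | sS] /orP [/eqP -> | s'S] ne.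
      * by rewrite eqxx in ne.
      * by move/hasPn: hn => /(_ s' s'S); rewrite -leNgt.
      * by move/hasPn: hn => /(_ s sS); rewrite -leNgt l1d_sym.
      * exact: sp.
  have := hK _ hS'; rewrite /=; move: hk; lia.
- case: (pselect (exists y : V, l1 y <= 1 /\ ~~ has (fun s : V => l1d y s < delta) S)).
    move=> [y [hy hn]].
    apply: (IH (y :: S)).
    + case: hS => u b sp; split.
      * rewrite /= u andbT; apply/negP => yS.
        by move/hasPn: hn => /(_ y yS); rewrite l1d_refl hdel0.
      * by move=> s; rewrite inE => /orP [/eqP -> //|]; apply: b.
      * move=> s s'; rewrite !inE => /orP [/eqP -> | sS] /orP [/eqP -> | s'S] ne.
        -- by rewrite eqxx in ne.
        -- by move/hasPn: hn => /(_ s' s'S); rewrite -leNgt.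
        -- by move/hasPn: hn => /(_ s sS); rewrite -leNgt l1d_sym.
        -- exact: sp.
    + by move=> x /hb; rewrite inE orbC => ->.
    + rewrite /=; lia.
  move=> hno; exists S; split => // y hy.
  case: (boolP (has (fun s : V => l1d y s < delta) S)) => [/hasP [s ? ?]|hn]; first by exists s.
  by exfalso; apply: hno; exists y.
Qed.


Lemma net_exists (eps : R) : (0 < d)%N -> 0 < eps -> eps <= 2 ->
  exists p : 'I_(Num.truncn ((1 + 4 / eps) ^+ d)) -> V,
  [/\ (forall l, l1 (p l) <= 1), (forall i, exists l, p l = ev i) &
      (forall l (y : 'I_d -> R), l1 y <= l1 (p l) ->
         exists l' : 'I_(Num.truncn ((1 + 4 / eps) ^+ d)), (l' <= l)%N /\ l1d y (p l') <= eps)].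
Proof.
move=> hd he he2.
set K := Num.truncn _.
set delta := eps / 2.
have hdel0 : 0 < delta by rewrite /delta; lra.
have hdel1 : delta <= 1 by rewrite /delta; lra.
have hK : forall S, sepS delta S -> (size S <= K)%N.
  move=> S [u b sp].
  have := packing hd hdel0 u b sp.
  have -> : 2 / delta = 4 / eps by rewrite /delta; field; lra.
  move=> h; rewrite /K truncn_ge_nat //; apply: exprn_ge0.
  have : 0 <= 4 / eps by apply: divr_ge0; lra.
  lra.
have [S [[uS bS spS] hbS hcov]] := max_sep hK hd hdel0 hdel1.
pose leT := fun x y : V => l1 x <= l1 y.
have leT_total : total leT by move=> x y; exact: le_total.
have leT_tr : transitive leT by move=> x y z; exact: le_trans.
have leT_refl : reflexive leT by move=> x; exact: lexx.
set T := sort leT S.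
have memT : T =i S by exact: mem_sort.
have szT : size T = size S by exact: size_sort.
have sT : sorted leT T by exact: sort_sorted.
have hsz : (size T <= K)%N by rewrite szT; apply: hK.
have v0T : v0 \in T by rewrite memT; apply: hbS; rewrite inE eqxx.
have Kpos : (0 < K)%N by apply: leq_trans hsz; rewrite -has_predT; apply/hasP; exists v0.
pose p (l : 'I_K) := nth v0 T l.
have pin : forall l : 'I_K, (l < size T)%N -> p l \in S.
  by move=> l hl; rewrite -memT mem_nth.
have pout : forall l : 'I_K, (size T <= l)%N -> p l = v0.
  by move=> l hl; rewrite /p nth_default.
exists p; split.
- move=> l; case: (ltnP l (size T)) => hl; first by apply: bS; apply: pin.
  by rewrite pout // l1_v0; lra.
- move=> i.
  have eT : ev i \in T by rewrite memT; apply: hbS; rewrite inE; apply/orP; right; apply: map_f; rewrite mem_enum.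
  have hi : (index (ev i) T < K)%N by apply: leq_trans hsz; rewrite index_mem.
  by exists (Ordinal hi); rewrite /p /= nth_index.
- move=> l y hy.
  have hp0 : l1 (nth v0 T 0) = 0.
    apply/eqP; rewrite eq_le l1_ge0 andbT.
    have h0 : (0 < size T)%N by rewrite -has_predT; apply/hasP; exists v0.
    have hi0 : (index v0 T < size T)%N by rewrite index_mem.
    have := (sorted_leq_nth leT_tr leT_refl v0 sT) 0 (index v0 T) h0 hi0 (leq0n _).
    by rewrite /leT nth_index // l1_v0.
  case: (ltP (l1 y) delta) => hyd.
    exists (Ordinal Kpos); split => //.
    apply: le_trans (l1d_l1 _ _) _; rewrite /p /= hp0 addr0; rewrite /delta in hyd; lra.
  have hyp : 0 < l1 y by lra.
  set c := 1 - delta / l1 y.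
  have hc0 : 0 <= c by rewrite /c subr_ge0 ler_pdivrMr // mul1r.
  pose y' : V := [ffun i => c * y i].
  have l1y' : l1 y' = l1 y - delta.
    rewrite /l1 (eq_bigr (fun i => c * `|y i|)); last first.
      by move=> i _; rewrite ffunE normrM ger0_norm.
    by rewrite -mulr_sumr -/(l1 y) /c mulrBl mul1r divfK // lt0r_neq0.
  have dyy' : l1d y y' = delta.
    rewrite /l1d (eq_bigr (fun i => (1 - c) * `|y i|)); last first.
      move=> i _; rewrite ffunE -{1}[y i]mul1r -mulrBl normrM ger0_norm //.
      by rewrite /c opprB addrC subrK; apply: divr_ge0; lra.
    by rewrite -mulr_sumr -/(l1 y) /c opprB addrC subrK divfK // lt0r_neq0.
  have hy'1 : l1 y' <= 1.
    rewrite l1y'; have : l1 (p l) <= 1.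
      case: (ltnP l (size T)) => hl; first by apply: bS; apply: pin.
      by rewrite pout // l1_v0; lra.
    lra.
  have [s sS hs] := hcov y' hy'1.
  have hls : l1 s < l1 (p l).
    have := l1_l1d y' s; lra.
  have sT' : s \in T by rewrite memT.
  have hidx : (index s T < size T)%N by rewrite index_mem.
  have hidxl : (index s T <= l)%N.
    case: (ltnP l (size T)) => hl; last by apply: ltnW; apply: leq_trans hidx hl.
    rewrite leqNgt; apply/negP => hlt.
    have := (sorted_leq_nth leT_tr leT_refl v0 sT) l (index s T) hl hidx (ltnW hlt).
    rewrite /leT nth_index // -/(p l); lra.
  have hK' : (index s T < K)%N by apply: leq_trans hsz.
  exists (Ordinal hK'); split => //.
  rewrite /p /= nth_index //.
  apply: le_trans (l1d_tri y y' s) _.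
  rewrite dyy' /delta; rewrite /delta in hs; lra.
Qed.

End Net.

Section Emb.
Variable R : realType.

Lemma supnorm_ge (k : nat) (x : 'rV[R]_k) i : `|x 0 i| <= supnorm x.
Proof. exact: le_bigmax. Qed.

Lemma supnorm_le (k : nat) (x : 'rV[R]_k) (c : R) :
  0 <= c -> (forall i, `|x 0 i| <= c) -> supnorm x <= c.
Proof. by move=> hc h; apply: bigmax_le. Qed.

Lemma supnorm_ge0 (k : nat) (x : 'rV[R]_k) : 0 <= supnorm x.
Proof. by apply: bigmax_ge_id. Qed.


Lemma mulmx_row1 (a b : nat) (x : 'rV[R]_a) (A : 'M[R]_(a, b)) j :
  (x *m A) 0 j = \sum_i x 0 i * A i j.
Proof. by rewrite !mxE. Qed.

Lemma emb_of (a b : nat) (A : 'M[R]_(a, b)) :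
  (forall j, \sum_i `|A i j| <= 1) ->
  (forall i, exists j, exists s : bool, forall i', A i' j = (-1) ^+ s * (i' == i)%:R) ->
  isEmb A.
Proof.
move=> hc hu x; apply/le_anti/andP; split.
  apply: supnorm_le; first exact: supnorm_ge0.
  move=> j; rewrite mulmx_row1.
  apply: le_trans (ler_norm_sum _ _ _) _.
  apply: (@le_trans _ _ (\sum_i supnorm x * `|A i j|)).
    apply: ler_sum => i _; rewrite normrM; apply: ler_wpM2r => //; exact: supnorm_ge.
  rewrite -mulr_sumr -[X in _ <= X]mulr1; apply: ler_wpM2l => //; exact: supnorm_ge0.
apply: supnorm_le; first exact: supnorm_ge0.
move=> i; have [j [s hj]] := hu i.
apply: le_trans (supnorm_ge _ j).
rewrite mulmx_row1 (bigD1 i) //= big1 ?addr0 => [|i' hi']; last first.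
  by rewrite hj (negbTE hi') mulr0 mulr0.
by rewrite hj eqxx mulr1 normrM normr_sign mulr1.
Qed.

Lemma emb_cols (a b : nat) (A : 'M[R]_(a, b)) : isEmb A ->
  forall j, \sum_i `|A i j| <= 1.
Proof.
move=> he j.
pose x : 'rV[R]_a := \row_i (if 0 <= A i j then 1 else -1).
have hx : supnorm x <= 1.
  apply: supnorm_le => // i; rewrite mxE; case: ifP => _; by rewrite ?normrN normr1.
rewrite -(he x) in hx.
apply: le_trans hx; apply: le_trans (supnorm_ge _ j).
rewrite mulmx_row1.
have -> : \sum_i x 0 i * A i j = \sum_i `|A i j|.
  apply: eq_bigr => i _; rewrite mxE; case: ifP => h.
    by rewrite mul1r ger0_norm.
  by rewrite mulN1r ltr0_norm // ltNge h.
exact: ler_norm.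
Qed.

Lemma emb_unit (a b : nat) (A : 'M[R]_(a, b)) : isEmb A ->
  forall i, exists j, exists s : bool, forall i', A i' j = (-1) ^+ s * (i' == i)%:R.
Proof.
move=> he i.
pose x : 'rV[R]_a := \row_i' (i' == i)%:R.
have hx : supnorm x = 1.
  apply/le_anti/andP; split.
    apply: supnorm_le => // i'; rewrite mxE; case: eqP => _; by rewrite ?normr1 ?normr0.
  by apply: le_trans (supnorm_ge _ i); rewrite mxE eqxx normr1.
have hxA : forall j, (x *m A) 0 j = A i j.
  move=> j; rewrite mulmx_row1 (bigD1 i) //= big1 ?addr0 => [|i' hi'].
    by rewrite mxE eqxx mul1r.
  by rewrite mxE (negbTE hi') mul0r.
have [j hj] : exists j, 1 <= `|A i j|.
  case: (boolP [exists j, 1 <= `|A i j|]) => [/existsP //| /existsPn hn].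
  have : supnorm (x *m A) < 1.
    apply: bigmax_lt => // j _; rewrite hxA; move: (hn j); by rewrite -ltNge.
  by rewrite he hx ltxx.
have hcol := emb_cols he j.
have hrest : forall i', i' != i -> A i' j = 0.
  move=> i' hi'.
  have : \sum_(i'' | i'' != i) `|A i'' j| <= 0.
    move: hcol; rewrite (bigD1 i) //=; lra.
  move=> h0; apply/eqP; rewrite -normr_eq0 eq_le normr_ge0 andbT.
  apply: le_trans h0; rewrite (bigD1 i') //= lerDl.
  by apply: sumr_ge0.
have habs : `|A i j| = 1.
  apply/le_anti; rewrite hj andbT; move: hcol; rewrite (bigD1 i) //=.
  have : 0 <= \sum_(i'' | i'' != i) `|A i'' j| by apply: sumr_ge0.
  lra.
exists j, (A i j < 0) => i'.
case: (eqVneq i' i) => [->|hi']; last by rewrite hrest // mulr0.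
rewrite mulr1; case: ltP => h.
  by rewrite expr1 -habs ltr0_norm // opprK.
by rewrite expr0 -habs ger0_norm.
Qed.

Lemma emb_mul (a b c : nat) (A : 'M[R]_(a, b)) (B : 'M[R]_(b, c)) :
  isEmb A -> isEmb B -> isEmb (A *m B).
Proof. by move=> hA hB x; rewrite mulmxA hB hA. Qed.

Lemma opnorm_le (a b : nat) (D : 'M[R]_(a, b)) (eps : R) :
  0 <= eps -> (forall j, \sum_i `|D i j| <= eps) -> opnorm D <= eps.
Proof.
move=> he hc; apply: ge_sup.
  exists (supnorm ((0 : 'rV[R]_a) *m D)), 0 => //=.
  by apply: supnorm_le => // i; rewrite mxE normr0.
move=> _ [x hx <-].
apply: supnorm_le => // j.
rewrite mulmx_row1; apply: le_trans (ler_norm_sum _ _ _) _.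
apply: le_trans (hc j); apply: ler_sum => i _.
rewrite normrM -[X in _ <= X]mul1r; apply: ler_wpM2r => //.
apply: le_trans (supnorm_ge _ i) _; exact: hx.
Qed.

End Emb.

Section Triv.
Variable R : realType.

Lemma col_sub (a b : nat) (A B : 'M[R]_(a, b)) j :
  \sum_i `|(A - B) i j| <= \sum_i `|A i j| + \sum_i `|B i j|.
Proof.
rewrite -big_split /=; apply: ler_sum => i _; rewrite !mxE; exact: ler_normB.
Qed.

Lemma diag_col (a : nat) (j : nat) : \sum_(i < a) `|((j == i)%:R : R)| <= 1.
Proof.
case: (ltnP j a) => hj.
  rewrite (bigD1 (Ordinal hj)) //= eqxx normr1 big1 ?addr0 // => i hi.
  have : j != i by apply: contra hi => /eqP e; apply/eqP/val_inj.
  by move/negbTE => ->; rewrite normr0.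
rewrite big1 // => i _.
have : j != i by apply/eqP => e; move: (ltn_ord i); rewrite -e ltnNge hj.
by move/negbTE => ->; rewrite normr0.
Qed.

Lemma diag_emb (a b : nat) : (a <= b)%N ->
  isEmb (\matrix_(i < a, j < b) (((j : nat) == i)%:R : R)).
Proof.
move=> hab; apply: emb_of.
  move=> j; apply: le_trans (diag_col a j); apply: ler_sum => i _; by rewrite mxE.
move=> i; exists (widen_ord hab i), false => i'.
by rewrite mxE /= expr0 mul1r eq_sym.
Qed.

Lemma ramsey_trivial d m r (eps : R) n : (d <= m)%N -> (m <= n)%N -> 2 <= eps ->
  EmbRamsey d m r eps n.
Proof.
move=> hdm hmn he c hc.
pose gamma := \matrix_(k < m, j < n) (((j : nat) == k)%:R : R).
pose phi0 := \matrix_(i < d, k < m) (((k : nat) == i)%:R : R).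
have hg : isEmb gamma := diag_emb hmn.
have hp0 : isEmb (phi0 *m gamma) := emb_mul (diag_emb hdm) hg.
exists gamma => //; exists (c (phi0 *m gamma)); first exact: hc.
move=> phi hphi; exists (phi0 *m gamma) => //.
apply: opnorm_le; first lra.
move=> j; apply: le_trans (col_sub _ _ j) _.
have := emb_cols (emb_mul hphi hg) j; have := emb_cols hp0 j; lra.
Qed.

End Triv.

Lemma minpre_le (n a : nat) (f : {ffun 'I_n -> 'I_a}) s (t : 'I_n) :
  f t == s -> (minpre f s <= t)%N.
Proof.
move=> h; rewrite /minpre.
have : t \in index_enum 'I_n by rewrite mem_index_enum.
elim: (index_enum 'I_n) => // a0 r IH; rewrite inE big_cons => /orP [/eqP <-|tr].
  by rewrite h geq_minl.
case: ifP => _; last exact: IH.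
by apply: leq_trans (geq_minr _ _) (IH tr).
Qed.

Lemma minpre_ge (n a : nat) (f : {ffun 'I_n -> 'I_a}) s c :
  (c <= n)%N -> (forall t : 'I_n, f t == s -> (c <= t)%N) -> (c <= minpre f s)%N.
Proof.
move=> hc h; rewrite /minpre; elim/big_ind: _ => //.
by move=> x y hx hy; rewrite leq_min hx hy.
Qed.

Lemma rigid_of (b K P : nat) (f : {ffun 'I_b -> 'I_K}) : (0 < P)%N -> b = (K * P)%N ->
  (forall t : 'I_b, (f t <= t %/ P)%N) ->
  (forall l : 'I_K, exists t : 'I_b, (t %/ P)%N = l /\ f t = l) -> rigid_surj f.
Proof.
move=> hP hb hle hex; split.
  by move=> s; have [t [_ ht]] := hex s; exists t.
have bnd : forall l : 'I_K, (l * P <= minpre f l < l.+1 * P)%N.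
  move=> l; apply/andP; split.
    apply: minpre_ge.
      by rewrite hb leq_mul2r ltnW ?orbT.
    move=> t /eqP ht; rewrite -leq_divRL //; rewrite -ht; exact: hle.
  have [t [ht1 ht2]] := hex l.
  apply: leq_ltn_trans (minpre_le (introT eqP ht2)) _.
  by rewrite -ht1 ltn_ceil.
move=> s0 s1 hs.
have /andP [_ h0] := bnd s0; have /andP [h1 _] := bnd s1.
apply: leq_trans h0 _; apply: leq_trans h1; by rewrite leq_mul2r hs orbT.
Qed.

Lemma compf_surj (n b a : nat) (f : {ffun 'I_b -> 'I_a}) (g : {ffun 'I_n -> 'I_b}) :
  rigid_surj f -> rigid_surj g -> forall l, exists j, compf f g j = l.
Proof.
move=> [hf _] [hg _] l; have [t ht] := hf l; have [j hj] := hg t.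
by exists j; rewrite /compf ffunE hj.
Qed.

Section Transfer.
Variable R : realType.

Definition gcol (d m : nat) (x : {ffun 'I_d -> 'I_m} * {ffun 'I_d -> bool}) (v : 'I_d -> R) : 'I_m -> R :=
  fun k => \sum_i ((x.1 i == k)%:R * (-1) ^+ (x.2 i) * v i).

Lemma sum_delta (m : nat) (k0 : 'I_m) (F : 'I_m -> R) :
  \sum_k (k0 == k)%:R * F k = F k0.
Proof.
rewrite (bigD1 k0) //= eqxx mul1r big1 ?addr0 // => k hk.
by rewrite eq_sym (negbTE hk) mul0r.
Qed.

Lemma l1_gcol d m (x : {ffun 'I_d -> 'I_m} * {ffun 'I_d -> bool}) (v : 'I_d -> R) : \sum_(k < m) `|gcol x v k| <= l1 v.
Proof.
apply: (@le_trans _ _ (\sum_(k < m) \sum_i (x.1 i == k)%:R * `|v i|)).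
  apply: ler_sum => k _; apply: le_trans (ler_norm_sum _ _ _) _.
  apply: ler_sum => i _; rewrite !normrM normr_sign mulr1 ger0_norm //.
rewrite exchange_big /=; apply: ler_sum => i _.
by rewrite (sum_delta (x.1 i) (fun=> `|v i|)).
Qed.

Lemma phi_gcol d m (phi : 'M[R]_(d, m)) (x : {ffun 'I_d -> 'I_m} * {ffun 'I_d -> bool}) (v : 'I_d -> R) :
  (forall i i', phi i' (x.1 i) = (-1) ^+ (x.2 i) * (i' == i)%:R) ->
  forall i', \sum_k phi i' k * gcol x v k = v i'.
Proof.
move=> h i'.
rewrite /gcol (eq_bigr (fun k => \sum_i (x.1 i == k)%:R * (phi i' k * ((-1) ^+ (x.2 i) * v i)))); last first.
  move=> k _; rewrite mulr_sumr; apply: eq_bigr => i _; ring.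
rewrite exchange_big /=.
rewrite (eq_bigr (fun i => phi i' (x.1 i) * ((-1) ^+ (x.2 i) * v i))); last first.
  by move=> i _; rewrite (sum_delta (x.1 i) (fun k => phi i' k * ((-1) ^+ (x.2 i) * v i))).
rewrite (bigD1 i') //= h eqxx big1 ?addr0.
  by rewrite mulr1 mulrA -signr_addb addbb expr0 mul1r.
by move=> i hi; rewrite h eq_sym (negbTE hi) mulr0 mul0r.
Qed.

Lemma l1_apply d m (phi : 'M[R]_(d, m)) (w : 'I_m -> R) :
  (forall k, \sum_i `|phi i k| <= 1) ->
  \sum_i `|\sum_k phi i k * w k| <= \sum_k `|w k|.
Proof.
move=> hc.
apply: (@le_trans _ _ (\sum_i \sum_k `|phi i k| * `|w k|)).
  apply: ler_sum => i _; apply: le_trans (ler_norm_sum _ _ _) _.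
  by apply: ler_sum => k _; rewrite normrM.
rewrite exchange_big /=; apply: ler_sum => k _.
rewrite -mulr_suml -[X in _ <= X]mul1r; apply: ler_wpM2r => //.
Qed.

End Transfer.

Section Main.
Variable R : realType.

Lemma transfer d m r (eps : R) K (p : 'I_K -> {ffun 'I_d -> R}) N :
  (0 < d)%N -> (d <= m)%N -> 0 <= eps ->
  (forall l, l1 (p l) <= 1) -> (forall i, exists l, p l = @ev R d i) ->
  (forall l (y : 'I_d -> R), l1 y <= l1 (p l) ->
     exists l' : 'I_K, (l' <= l)%N /\ l1d y (p l') <= eps) ->
  GRprop K (K * 2 ^ d * (m`! %/ (m - d)`!))%N r N -> EmbRamsey d m r eps N.
Proof.
move=> hd hdm he hN1 hN2 hN3 hGR.
set b := (K * 2 ^ d * (m`! %/ (m - d)`!))%N in hGR *.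
set P := (2 ^ d * (m`! %/ (m - d)`!))%N.
have hb : b = (K * P)%N by rewrite /b /P mulnA.
have hP : (0 < P)%N by rewrite /P muln_gt0 expn_gt0 /= -ffact_factd // ffact_gt0.
pose Tpat := ({ffun 'I_d -> 'I_m} * {ffun 'I_d -> bool})%type.
pose Apat := [set x : Tpat | injectiveb x.1].
have cardA : #|Apat| = P.
  have -> : Apat = finset.setX [set f : {ffun 'I_d -> 'I_m} | injectiveb f] [set: {ffun 'I_d -> bool}].
    by apply/setP => x; rewrite !inE andbT.
  rewrite cardsX card_inj_ffuns cardsT card_ffun !card_ord card_bool /P.
  by rewrite mulnC ffact_factd.
pose x0 : Tpat := ([ffun i => widen_ord hdm i], [ffun => false]).
pose pat (pi : 'I_P) : Tpat := nth x0 (enum Apat) pi.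
have pat_surj : forall x, x \in Apat -> exists pi : 'I_P, pat pi = x.
  move=> x hx.
  have hi : (index x (enum Apat) < P)%N by rewrite -cardA cardE index_mem mem_enum.
  by exists (Ordinal hi); rewrite /pat /= nth_index // mem_enum.
have levP : forall t : 'I_b, (t %/ P < K)%N.
  by move=> t; rewrite ltn_divLR // -hb.
pose lev (t : 'I_b) : 'I_K := Ordinal (levP t).
pose pt (t : 'I_b) : 'I_P := Ordinal (ltn_pmod t hP).
have mktP : forall (l : 'I_K) (pi : 'I_P), (l * P + pi < b)%N.
  move=> l pi; rewrite hb; apply: leq_trans (_ : (l.+1 * P <= K * P)%N).
    by rewrite mulSn addnC ltn_add2r.
  by rewrite leq_mul2r ltn_ord orbT.
pose mkt (l : 'I_K) (pi : 'I_P) : 'I_b := Ordinal (mktP l pi).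
have lev_mkt : forall l pi, lev (mkt l pi) = l.
  by move=> l pi; apply: val_inj; rewrite /= divnMDl // divn_small // addn0.
have pt_mkt : forall l pi, pt (mkt l pi) = pi.
  by move=> l pi; apply: val_inj; rewrite /= modnMDl modn_small.
pose G : 'M[R]_(m, b) := \matrix_(k, t) gcol (pat (pt t)) (p (lev t)) k.
have G_cols : forall t, \sum_k `|G k t| <= 1.
  move=> t; apply: le_trans (hN1 (lev t)).
  apply: le_trans (l1_gcol (pat (pt t)) (p (lev t))).
  by apply: ler_sum => k _; rewrite mxE.
have i0P : (0 < d)%N := hd.
pose i0 : 'I_d := Ordinal i0P.
have G_units : forall k : 'I_m, exists t, forall k', G k' t = (-1) ^+ false * (k' == k)%:R.
  move=> k.
  pose sg : {ffun 'I_d -> 'I_m} := [ffun i => tperm (widen_ord hdm i0) k (widen_ord hdm i)].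
  have sg_inj : injectiveb sg.
    apply/injectiveP => i j; rewrite !ffunE => /perm_inj /(congr1 val) /= e.
    exact: val_inj.
  have hx : (sg, [ffun => false]) \in Apat by rewrite inE.
  have [pi hpi] := pat_surj _ hx.
  have [l0 hl0] := hN2 i0.
  exists (mkt l0 pi) => k'.
  rewrite mxE lev_mkt pt_mkt hpi hl0 /gcol /= expr0 mul1r.
  rewrite (bigD1 i0) //= big1 ?addr0 => [|i hi]; last first.
    by rewrite !ffunE (negbTE hi) mulr0.
  rewrite /sg !ffunE eqxx tpermL expr0 !mulr1.
  by rewrite eq_sym.
have G_emb_cols : forall (n : nat) (g : {ffun 'I_n -> 'I_b}), (forall t, exists j, g j = t) ->
    isEmb (\matrix_(k, j) G k (g j)).
  move=> n g hg; apply: emb_of.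
    by move=> j; apply: le_trans (G_cols (g j)); apply: ler_sum => k _; rewrite mxE.
  move=> k; have [t ht] := G_units k; have [j hj] := hg t.
  by exists j, false => k'; rewrite mxE hj ht.
pose Mf (f : {ffun 'I_N -> 'I_K}) : 'M[R]_(d, N) := \matrix_(i, j) p (f j) i.
have Mf_emb : forall f : {ffun 'I_N -> 'I_K}, (forall l, exists j, f j = l) -> isEmb (Mf f).
  move=> f hf; apply: emb_of.
    by move=> j; apply: le_trans (hN1 (f j)); apply: ler_sum => i _; rewrite mxE.
  move=> i; have [l hl] := hN2 i; have [j hj] := hf l.
  by exists j, false => i'; rewrite mxE hj hl ffunE expr0 mul1r.
move=> c hc.
have [gamma' hg' [col hcol]] := hGR (fun f => c (Mf f))
  (fun f hf => hc _ (Mf_emb f (proj1 hf))).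
have rig : forall f : {ffun 'I_b -> 'I_K}, (forall t, (f t <= lev t)%N) ->
    (forall l, f (mkt l (Ordinal hP)) = l) -> rigid_surj f.
  move=> f h1 h2; apply: (rigid_of hP hb) => // l.
  by exists (mkt l (Ordinal hP)); split; [rewrite -[X in X = _]/(val (lev _)) lev_mkt | apply: h2].
exists (\matrix_(k, j) G k (gamma' j)).
  by apply: G_emb_cols; case: hg'.
exists col.
  pose f0 : {ffun 'I_b -> 'I_K} := [ffun t => lev t].
  have rf0 : rigid_surj f0 by apply: rig => [t|l]; rewrite ffunE ?lev_mkt.
  rewrite -(hcol f0 rf0); apply: hc; apply: Mf_emb; exact: compf_surj.
move=> phi hphi.
have hu := emb_unit hphi.
have hu' : forall i : 'I_d, exists js : 'I_m * bool,
    forall i', phi i' js.1 = (-1) ^+ js.2 * (i' == i)%:R.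
  by move=> i; have [j [s h]] := hu i; exists (j, s).
have [F hF] := choice hu'.
pose sg : {ffun 'I_d -> 'I_m} := [ffun i => (F i).1].
pose ss : {ffun 'I_d -> bool} := [ffun i => (F i).2].
have hsg : forall i i', phi i' (sg i) = (-1) ^+ (ss i) * (i' == i)%:R.
  by move=> i i'; rewrite !ffunE; apply: hF.
have sg_inj : injectiveb sg.
  apply/injectiveP => i j e.
  have := hsg j i; rewrite -e hsg eqxx mulr1.
  case: eqP => // _; rewrite mulr0 => /eqP; by rewrite signr_eq0.
have hin : (sg, ss) \in Apat by rewrite inE.
have [pis hpis] := pat_surj (sg, ss) hin.
pose colPG (t : 'I_b) : 'I_d -> R := fun i' => \sum_k phi i' k * G k t.
pose f : {ffun 'I_b -> 'I_K} := [ffun t => if pt t == pis then lev t else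
  odflt (lev t) [pick l' : 'I_K | (l' <= lev t)%N && (l1d (colPG t) (p l') <= eps)]].
have f_le : forall t, (f t <= lev t)%N.
  move=> t; rewrite ffunE; case: ifP => // _.
  by case: pickP => [l' /andP [] |] //.
have f_star : forall l, f (mkt l pis) = l.
  by move=> l; rewrite ffunE pt_mkt eqxx lev_mkt.
have hcolphi : forall k, \sum_i `|phi i k| <= 1 := emb_cols hphi.
have f_good : forall t, l1d (colPG t) (p (f t)) <= eps.
  move=> t; rewrite ffunE; case: ifP => [/eqP ept | hne].
    have -> : colPG t = p (lev t).
      apply/funext => i'; rewrite /colPG.
      rewrite (eq_bigr (fun k => phi i' k * gcol (sg, ss) (p (lev t)) k)).
        by apply: phi_gcol.
      by move=> k _; rewrite mxE ept hpis.
    by rewrite l1d_refl.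
  case: pickP => [l' /andP [] //| hn].
  have hy : l1 (colPG t) <= l1 (p (lev t)).
    apply: le_trans (l1_apply (fun k => G k t) hcolphi) _.
    by apply: le_trans (l1_gcol (pat (pt t)) (p (lev t))); apply: ler_sum => k _; rewrite mxE.
  have [l' [h1 h2]] := hN3 (lev t) (colPG t) hy.
  by move: (hn l'); rewrite h1 h2.
have rf : rigid_surj f.
  apply: (rigid_of hP hb) => [t|l]; first exact: f_le.
  by exists (mkt l pis); split; [rewrite -[X in X = _]/(val (lev _)) lev_mkt | apply: f_star].
exists (Mf (compf f gamma')).
  split; last exact: hcol.
  by apply: Mf_emb; exact: compf_surj.
apply: opnorm_le => // j.
apply: le_trans (f_good (gamma' j)).
rewrite le_eqVlt; apply/orP; left; apply/eqP.
apply: eq_bigr => i _; rewrite !mxE /compf ffunE /colPG.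
congr (`|_ - _|); apply: eq_bigr => k _; by rewrite mxE.
Qed.

End Main.

Unset Implicit Arguments.
Set Strict Implicit.

Theorem theorem6p27 (R : realType) (d m r : nat) (eps : R) :
  (0 < d)%N -> (d <= m)%N -> (0 < r)%N -> 0 < eps ->
  let k := Num.truncn ((1 + 4 / eps) ^+ d) in
  forall N : nat, isGR k (k * 2 ^ d * (m`! %/ (m - d)`!)) r N ->
  exists2 n : nat, (n <= N)%N & EmbRamsey d m r eps n.
Proof.
move=> hd hdm hr he k N [hGR _].
exists N => //.
case: (lerP eps 2) => he2.
  have [p [h1 h2 h3]] := net_exists hd he he2.
  exact: (transfer hd hdm (ltW he) h1 h2 h3 hGR).
apply: ramsey_trivial => //; last lra.
have [g [hg _] _] := hGR (fun _ => 0%N) (fun _ _ => hr).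
set b := (k * 2 ^ d * (m`! %/ (m - d)`!))%N in g hg *.
have hbN : (b <= N)%N.
  have [h hh] := choice hg.
  have hinj : injective h by move=> x y e; rewrite -(hh x) -(hh y) e.
  by have := leq_card h hinj; rewrite !card_ord.
apply: leq_trans hbN.
have hk : (0 < k)%N.
  rewrite /k truncn_gt0; apply: exprn_ege1.
  have : 0 < 4 / eps by apply: divr_gt0; lra.
  lra.
have hf : (m <= m`! %/ (m - d)`!)%N.
  rewrite -ffact_factd // -(prednK hd).
  rewrite ffactnS; apply: leq_pmulr; rewrite ffact_gt0; lia.
apply: leq_trans hf _; rewrite /b; apply: leq_pmull.
by rewrite muln_gt0 hk expn_gt0.
Qed.
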